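(* Let $m$ and $n$ be powers of $2$ with $m \ge 16$, $n \ge 4$ and $m \le 4n$, and let $$G = G(m,n) := \langle a, b \mid a^m = 1,\ b^n = 1,\ [b,a] = a^4 \rangle.$$ Then $G$ does not satisfy property $( * )$. Consequently, there are infinitely many finite $2$-groups that do not satisfy $( * )$.
   Context: Commutators are $[x,y] = x^{-1}y^{-1}xy$. An involution is an element of order exactly $2$. A finite group $G$ satisfies property $( * )$ if there exist a group $\Gamma$ generated by involutions and a subgroup of index $2$ in $\Gamma$ that is isomorphic to $G$. *)

(* Defs.v *)
From mathcomp Require Import all_boot all_fingroup.
Set Implicit Arguments. Unset Strict Implicit. Unset Printing Implicit Defensive.
Local Open Scope group_scope.

Definition involution (gT : finGroupType) (x : gT) : bool := #[x] == 2%N.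

(* Since G is finite, such a
   Gam has order 2|G| and is finite, so Gam ranges over finite groups. *)
Definition property_star (gT : finGroupType) (G : {set gT}) : Prop :=
  exists (rT : finGroupType) (Gam H : {group rT}) (S : {set rT}),
    [/\ {in S, forall x, involution x}, Gam :=: <<S>>,
        H \subset Gam, #|Gam : H| = 2%N & H \isog G].

(* Main.v *)
Require Import Defs.
From mathcomp Require Import all_boot all_order all_algebra all_fingroup all_solvable.
From mathcomp Require Import ring zify.
Import GRing.Theory.
Set Implicit Arguments. Unset Strict Implicit. Unset Printing Implicit Defensive.
Local Open Scope group_scope.

Section Z4.
Local Open Scope ring_scope.
Definition L4 : seq 'Z_4 := [:: 0; 1; 2; 3].
Definition L2 : seq 'Z_4 := [:: 0; 1].
Lemma memL4 (x : 'Z_4) : x \in L4.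
Proof. by case: x => [[|[|[|[|?]]]] ?]. Qed.
Lemma red2 (u : 'Z_4) : exists2 u0, u0 \in L2 & 2 * u = 2 * u0.
Proof.
case: u => [[|[|[|[|?]]]] ?] //.
all: first [by exists 0 => //; apply/eqP; vm_compute | by exists 1 => //; apply/eqP; vm_compute].
Qed.
Lemma two_div (x : 'Z_4) : x * 2 = 0 -> exists w, x = 2 * w.
Proof.
case: x => [[|[|[|[|?]]]] ?] //= h.
all: first [by exists 0; apply/eqP; vm_compute | by exists 1; apply/eqP; vm_compute
  | by move: h => /eqP; vm_compute].
Qed.

Definition Ib (J1 I1 J2 I2 x y : 'Z_4) :=
  ((x + x*J2 + y*J1 == 0) && (y + x*I2 + y*I1 == 0)).

Lemma t3b : all (fun J1 => all (fun I1 => all (fun J2 => all (fun I2 =>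
  all (fun u => all (fun v => all (fun u' => all (fun v' =>
  Ib J1 I1 J2 I2 (-(2*u)) (1-2*v) ==> Ib J1 I1 J2 I2 (1-2*u') (-(2*v')) ==>
  [&& J1 == 0, I1 == -1 & J2 == -1]) L2) L2) L2) L2) L4) L4) L4) L4.
Proof. by vm_compute. Qed.

Definition Good (J1 I1 J2 I2 x y : 'Z_4) :=
  exists p q u v, [/\ Ib J1 I1 J2 I2 p q, x = p + 2 * u & y = q + 2 * v].

Variables J1 I1 J2 I2 : 'Z_4.

Lemma fin_T p q u v p' q' u' v' :
  Ib J1 I1 J2 I2 p q -> 0 = p + 2 * u -> 1 = q + 2 * v ->
  Ib J1 I1 J2 I2 p' q' -> 1 = p' + 2 * u' -> 0 = q' + 2 * v' ->
  [/\ J1 = 0, I1 = -1 & J2 = -1].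
Proof.
move=> h1 hu hv h2 hu' hv'.
have ep : p = -(2 * u) by apply/eqP; rewrite -addr_eq0 -hu.
have eq : q = 1 - 2 * v by rewrite -[q](addrK (2 * v)) -hv.
have ep' : p' = 1 - 2 * u' by rewrite -[p'](addrK (2 * u')) -hu'.
have eq' : q' = -(2 * v') by apply/eqP; rewrite -addr_eq0 -hv'.
have [u0 U0 eu] := red2 u; have [v0 V0 ev] := red2 v.
have [u1 U1 eu'] := red2 u'; have [v1 V1 ev'] := red2 v'.
rewrite ep eq eu ev in h1; rewrite ep' eq' eu' ev' in h2.
have := allP (allP (allP (allP (allP (allP (allP (allP t3b _ (memL4 J1)) _ (memL4 I1)) _ (memL4 J2)) _ (memL4 I2)) _ U0) _ V0) _ U1) _ V1.
by rewrite h1 h2 /= => /and3P[/eqP -> /eqP -> /eqP ->].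
Qed.

Let G := Good J1 I1 J2 I2.

Lemma good_add x y x' y' : G x y -> G x' y' -> G (x + x') (y + y').
Proof.
move=> [p [q [u [v [/andP[/eqP h1 /eqP h2] -> ->]]]]].
move=> [p' [q' [u' [v' [/andP[/eqP h1' /eqP h2'] -> ->]]]]].
exists (p + p'), (q + q'), (u + u'), (v + v'); split; last by ring.
- apply/andP; split; apply/eqP.
  + have -> : (p + p') + (p + p') * J2 + (q + q') * J1 =
      (p + p * J2 + q * J1) + (p' + p' * J2 + q' * J1) by ring.
    by rewrite h1 h1' addr0.
  + have -> : (q + q') + (p + p') * I2 + (q + q') * I1 =
      (q + p * I2 + q * I1) + (q' + p' * I2 + q' * I1) by ring.
    by rewrite h2 h2' addr0.
- by ring.
Qed.

Lemma good_ib x y : Ib J1 I1 J2 I2 x y -> G x y.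
Proof. by move=> h; exists x, y, 0, 0; split; rewrite ?mulr0 ?addr0. Qed.

Lemma good_2 u v : G (2 * u) (2 * v).
Proof.
by exists 0, 0, u, v; split; rewrite ?add0r // /Ib !mul0r !addr0 eqxx.
Qed.

Hypotheses (e1 : J1 * J2 + I1 * J1 = 0) (e2 : J1 * I2 + I1 * I1 = 1)
  (e3 : J2 * J2 + I2 * J1 = 1) (e4 : J2 * I2 + I2 * I1 = 0).

Lemma ib_T p q : Ib J1 I1 J2 I2 p q -> Ib J1 I1 J2 I2 (p * J2 + q * J1) (p * I2 + q * I1).
Proof.
move=> /andP[/eqP h1 /eqP h2]; apply/andP; split; apply/eqP.
  have -> : (p * J2 + q * J1) + (p * J2 + q * J1) * J2 + (p * I2 + q * I1) * J1 =
    p * (J2 * J2 + I2 * J1) + q * (J1 * J2 + I1 * J1) + (p * J2 + q * J1) by ring.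
  rewrite e3 e1 mulr1 mulr0 addr0 -h1; ring.
have -> : (p * I2 + q * I1) + (p * J2 + q * J1) * I2 + (p * I2 + q * I1) * I1 =
  p * (J2 * I2 + I2 * I1) + q * (J1 * I2 + I1 * I1) + (p * I2 + q * I1) by ring.
rewrite e4 e2 mulr1 mulr0 add0r -h2; ring.
Qed.

Lemma good_T x y : G x y -> G (x * J2 + y * J1) (x * I2 + y * I1).
Proof.
move=> [p [q [u [v [h -> ->]]]]].
exists (p * J2 + q * J1), (p * I2 + q * I1), (u * J2 + v * J1), (u * I2 + v * I1).
by split; [exact: ib_T | ring | ring].
Qed.

End Z4.

Section Core.
Variables (rT : finGroupType) (a b : rT) (m n : nat).
Hypotheses (m16 : (16 %| m)%N) (mpos : (0 < m)%N) (n4 : (4 %| n)%N) (npos : (0 < n)%N).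
Hypotheses (am : a ^+ m = 1) (bn : b ^+ n = 1) (abr : [~ b, a] = a ^+ 4).
Let c := (m - 3)%N.

Lemma m3 : (3 <= m)%N.
Proof. by have := dvdn_leq mpos m16; apply: leq_trans. Qed.

Lemma conj_ab : a ^ b = a ^+ c.
Proof.
have h : (a ^ b)^-1 = a ^+ 3.
  apply: (mulIg a); rewrite -expgSr -abr commgEr conjVg //.
apply/eqP; rewrite -[a ^ b]invgK h eq_invg_mul -expgnDr /c subnKC ?am //.
exact: m3.
Qed.

Lemma conjX_ab i j : (a ^+ i) ^ (b ^+ j) = a ^+ (i * c ^ j).
Proof.
elim: j => [|j IH]; first by rewrite expg0 conjg1 expn0 muln1.
by rewrite expgSr conjgM IH conjXg conj_ab -expgnA expnS mulnCA.
Qed.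

Lemma ab_swap i j : a ^+ i * b ^+ j = b ^+ j * a ^+ (i * c ^ j).
Proof. by rewrite conjgC conjX_ab. Qed.

Lemma nf_mul j i l k :
  (b ^+ j * a ^+ i) * (b ^+ l * a ^+ k) = b ^+ (j + l) * a ^+ (i * c ^ l + k).
Proof.
by rewrite mulgA -(mulgA (b ^+ j)) ab_swap mulgA -expgnDr -mulgA -expgnDr.
Qed.

Fixpoint Sx j k := if k is k'.+1 then (Sx j k' * c ^ j + 1)%N else 0%N.

Lemma nf_exp j i k :
  (b ^+ j * a ^+ i) ^+ k = b ^+ (j * k) * a ^+ (i * Sx j k).
Proof.
elim: k => [|k IH]; first by rewrite !expg0 !muln0 !expg0 mulg1.
rewrite expgSr IH nf_mul /=; congr (b ^+ _ * a ^+ _).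
  by rewrite mulnS addnC.
by rewrite mulnDr muln1 mulnA.
Qed.

Let H := <[a]> <*> <[b]>.

Lemma b_norm : <[b]> \subset 'N(<[a]>).
Proof. by rewrite norms_cycle conj_ab mem_cycle. Qed.

Lemma HE : H = <[b]> * <[a]>.
Proof. by rewrite /H (norm_joinEr b_norm) (normC b_norm). Qed.

Lemma nf_ex h : h \in H -> exists j i, h = b ^+ j * a ^+ i.
Proof. by rewrite HE => /mulsgP[x y /cycleP[j ->] /cycleP[i ->] ->]; exists j, i. Qed.

Lemma card_dvd : (#|H| %| m * n)%N.
Proof.
have := mul_cardG <[a]> <[b]>; rewrite -(norm_joinEr b_norm) -/H => E.
apply: dvdn_trans (dvdn_mulr #|<[a]> :&: <[b]>| (dvdnn #|H|)) _.
rewrite -E; apply: dvdn_mul; rewrite -/(order _) order_dvdn ?am ?bn //.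
Qed.

Hypothesis big : (m * n <= #|H|)%N.

Lemma ord_facts : [/\ #[a] = m, #[b] = n & <[a]> :&: <[b]> = 1].
Proof.
have := mul_cardG <[a]> <[b]>; rewrite -(norm_joinEr b_norm) -/H.
have oa : (#[a] <= m)%N by apply: dvdn_leq => //; rewrite order_dvdn am.
have ob : (#[b] <= n)%N by apply: dvdn_leq => //; rewrite order_dvdn bn.
have i1 := cardG_gt0 (<[a]> :&: <[b]>)%G.
have h1 : (0 < #|H|)%N by apply: leq_trans big; rewrite muln_gt0 mpos.
rewrite /order => E.
have oab : (#|<[a]>| * #|<[b]>| <= m * n)%N by exact: leq_mul.
have I1 : #|<[a]> :&: <[b]>| = 1%N.
  move: oab big h1 i1; rewrite E; set X := #|H|; set Y := #|_ :&: _|. nia.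
rewrite I1 muln1 in E.
have [ea eb] : #|<[a]>| = m /\ #|<[b]>| = n.
  rewrite /order in oa ob; move: E oab big oa ob mpos npos; set X := #|H|; set A := #|<[a]>|; set B := #|<[b]>|.
  move=> E1 h2 h3 h4 h5 h6 h7; split; nia.
split => //; have := trivg_card1 (<[a]> :&: <[b]>)%G; rewrite I1 eqxx => /eqP -> //.
Qed.

Lemma nf_uniq j i l k : b ^+ j * a ^+ i = b ^+ l * a ^+ k ->
  j = l %[mod n] /\ i = k %[mod m].
Proof.
move=> E; have [oa ob tI] := ord_facts.
have E2 : (b ^+ l)^-1 * b ^+ j = a ^+ k * (a ^+ i)^-1.
  by apply: (canRL (mulgK (a ^+ i))); rewrite -mulgA E mulKg.
have z1 : (b ^+ l)^-1 * b ^+ j = 1.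
  have : (b ^+ l)^-1 * b ^+ j \in <[a]> :&: <[b]>.
    by rewrite inE {1}E2 !groupM ?groupV ?mem_cycle.
  by rewrite tI => /set1gP.
split; apply/eqP.
  by rewrite -ob -eq_expg_mod_order eq_sym eq_mulVg1 z1.
rewrite -oa -eq_expg_mod_order eq_sym eq_mulgV1.
have -> : a ^+ k * (a ^+ i)^-1 = 1 by rewrite -E2 z1.
by [].
Qed.


Notation r4 x := ((x%:R : 'Z_4))%R.
Notation r16 x := ((x%:R : 'Z_16))%R.

Lemma r4_mod x y : x = y %[mod m] -> r4 x = r4 y.
Proof.
move=> E; have h4 : (4 %| m)%N := dvdn_trans (isT : (4 %| 16)%N) m16.
by rewrite -[LHS](@Zp_nat_mod 4) // -(modn_dvdm x h4) E modn_dvdm // Zp_nat_mod.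
Qed.
Lemma r4_modn x y : x = y %[mod n] -> r4 x = r4 y.
Proof.
move=> E.
by rewrite -[LHS](@Zp_nat_mod 4) // -(modn_dvdm x n4) E modn_dvdm // Zp_nat_mod.
Qed.
Lemma r16_mod x y : x = y %[mod m] -> r16 x = r16 y.
Proof.
move=> E.
by rewrite -[LHS](@Zp_nat_mod 16) // -(modn_dvdm x m16) E modn_dvdm // Zp_nat_mod.
Qed.

Lemma r4c : r4 c = 1%R.
Proof.
rewrite /c natrB ?m3 //.
have h4 : (4 %| m)%N := dvdn_trans (isT : (4 %| 16)%N) m16.
rewrite -(@Zp_nat_mod 4 _ m) // (eqP h4).
by apply/eqP; vm_compute.
Qed.
Lemma r16c : r16 c = (-3)%R.
Proof.
rewrite /c natrB ?m3 //.
rewrite -(@Zp_nat_mod 16 _ m) // (eqP m16).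
by apply/eqP; vm_compute.
Qed.

Lemma r4S j k : r4 (Sx j k) = r4 k.
Proof.
elim: k => [//|k IH] /=.
by rewrite natrD natrM natrX r4c expr1n GRing.mulr1 IH -natrD addn1.
Qed.

Lemma nf_r4 j i l k : b ^+ j * a ^+ i = b ^+ l * a ^+ k -> r4 j = r4 l /\ r4 i = r4 k.
Proof. by move/nf_uniq => [h1 h2]; split; [apply: r4_modn | apply: r4_mod]. Qed.


Lemma core_main (Gam : {group rT}) (S : {set rT}) :
  {in S, forall x, involution x} -> Gam :=: <<S>> -> H \subset Gam ->
  #|Gam : H| = 2%N -> False.
Proof.
move=> invS defG sHG iHG.
have nHG := index2_normal sHG iHG.
have [t St tH] : exists2 t, t \in S & t \notin H.
  apply/subsetPn; apply/negP => sSH.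
  have sGH : Gam \subset H by rewrite defG gen_subG.
  have eGH : H = Gam :> {set rT} by apply/eqP; rewrite eqEsubset sHG sGH.
  by move: iHG; rewrite -eGH indexgg.
have Gt : t \in Gam by rewrite defG mem_gen.
have t2 : t * t = 1.
  by have := invS t St; rewrite /involution => /eqP o2; rewrite -[t * t]/(t ^+ 2) -o2 expg_order.
have tV : t^-1 = t by apply/eqP; rewrite eq_invg_mul t2.
have sig h : h \in H -> h ^ t \in H.
  by move=> Hh; rewrite memJ_norm // (subsetP (normal_norm nHG)).
have Ha : a \in H by rewrite (subsetP (joing_subl _ _)) ?cycle_id.
have Hb : b \in H by rewrite (subsetP (joing_subr _ _)) ?cycle_id.
have [j1 [i1 ea]] := nf_ex (sig a Ha).
have [j2 [i2 eb]] := nf_ex (sig b Hb).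
have sig_nf j i : exists j' i', [/\ (b ^+ j * a ^+ i) ^ t = b ^+ j' * a ^+ i',
     r4 j' = (r4 j * r4 j2 + r4 i * r4 j1)%R & r4 i' = (r4 j * r4 i2 + r4 i * r4 i1)%R].
  exists (j2 * j + j1 * i)%N, (i2 * Sx j2 j * c ^ (j1 * i) + i1 * Sx j1 i)%N.
  rewrite conjMg !conjXg eb ea !nf_exp nf_mul; split => //.
    by rewrite natrD !natrM; ring.
  by rewrite natrD !natrM natrX r4c expr1n !r4S; ring.
have [T1 T2] : (r4 j1 * r4 j2 + r4 i1 * r4 j1 = 0 /\ r4 j1 * r4 i2 + r4 i1 * r4 i1 = 1)%R.
  have [j' [i' [e1 c1 c2]]] := sig_nf j1 i1.
  have : b ^+ j' * a ^+ i' = b ^+ 0 * a ^+ 1.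
    by rewrite -e1 -ea -conjgM t2 conjg1 mul1g expg1.
  by move/nf_r4 => [d1 d2]; rewrite -c1 -c2 d1 d2.
have [T3 T4] : (r4 j2 * r4 j2 + r4 i2 * r4 j1 = 1 /\ r4 j2 * r4 i2 + r4 i2 * r4 i1 = 0)%R.
  have [j' [i' [e1 c1 c2]]] := sig_nf j2 i2.
  have : b ^+ j' * a ^+ i' = b ^+ 1 * a ^+ 0.
    by rewrite -e1 -eb -conjgM t2 conjg1 mulg1 expg1.
  by move/nf_r4 => [d1 d2]; rewrite -c1 -c2 d1 d2.
pose Gd := Good (r4 j1) (r4 i1) (r4 j2) (r4 i2).
pose inM h := exists j i, h = b ^+ j * a ^+ i /\ Gd (r4 j) (r4 i).
have inM_mul h k : inM h -> inM k -> inM (h * k).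
  move=> [j [i [-> g1]]] [l [k' [-> g2]]]; rewrite nf_mul.
  exists (j + l)%N, (i * c ^ l + k')%N; split => //.
  rewrite natrD natrD natrM natrX r4c expr1n GRing.mulr1.
  exact: good_add.
have inM_sig h : inM h -> inM (h ^ t).
  move=> [j [i [-> g1]]]; have [j' [i' [e1 c1 c2]]] := sig_nf j i.
  exists j', i'; split => //; rewrite c1 c2; exact: good_T.
have inM_H h : h \in H -> h * h = 1 -> inM h.
  move=> /nf_ex [j [i ->]] h2; exists j, i; split => //.
  move: h2; rewrite nf_mul -[1]mulg1 -{1}(expg0 b) -(expg0 a) => /nf_r4 [d1 d2].
  have e0 : r4 0%N = 0%R by [].
  rewrite e0 in d1 d2.
  have /two_div [w1 ->] : (r4 j * 2 = 0)%R by rewrite -d1 natrD; ring.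
  have /two_div [w2 ->] : (r4 i * 2 = 0)%R.
    by rewrite -d2 natrD natrM natrX r4c expr1n; ring.
  exact: good_2.
have inM_t h : h \in H -> h * h ^ t = 1 -> inM h.
  move=> /nf_ex [j [i ->]] h2; exists j, i; split => //.
  have [j' [i' [e1 c1 c2]]] := sig_nf j i.
  move: h2; rewrite e1 nf_mul -[1]mulg1 -{1}(expg0 b) -(expg0 a) => /nf_r4 [d1 d2].
  have e0 : r4 0%N = 0%R by [].
  rewrite e0 in d1 d2.
  apply: good_ib; apply/andP; split; apply/eqP.
    by rewrite -d1 natrD c1; ring.
  by rewrite -d2 natrD natrM natrX r4c expr1n c2; ring.
have inM1 : inM 1.
  exists 0%N, 0%N; rewrite !expg0 mulg1; split => //.
  by have := good_2 (r4 j1) (r4 i1) (r4 j2) (r4 i2) 0 0; rewrite !GRing.mulr0.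
pose P x := (x \in H /\ inM x) \/ (exists2 h, x = h * t & h \in H /\ inM h).
have step x s : P x -> s \in S -> P (x * s).
  have SG : s \in S -> s \in Gam by move=> Ss; rewrite defG mem_gen.
  move=> Px Ss; have s2 : s * s = 1.
    by have := invS s Ss; rewrite /involution => /eqP o2; rewrite -[s * s]/(s ^+ 2) -o2 expg_order.
  case Hs : (s \in H).
    have iMs := inM_H s Hs s2.
    case: Px => [[Hx iMx] | [h -> [Hh iMh]]].
      by left; split; [rewrite groupM | apply: inM_mul].
    right; exists (h * s ^ t); last by split; [rewrite groupM ?sig | apply: inM_mul => //; apply: inM_sig].
    by rewrite /conjg tV -!mulgA t2 mulg1.
  have : s \in H :* t by rewrite (rcoset_index2 sHG iHG) ?inE ?Hs ?SG // tH Gt.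
  case/rcosetP => h Hh es.
  have iMh : inM h.
    apply: inM_t => //; move: s2; rewrite es /conjg tV -!mulgA => <-.
    by rewrite !mulgA.
  case: Px => [[Hx iMx] | [h' -> [Hh' iMh']]].
    by right; exists (x * h); [rewrite es mulgA | split; [rewrite groupM | apply: inM_mul]].
  left; rewrite es.
  have -> : h' * t * (h * t) = h' * h ^ t by rewrite /conjg tV !mulgA.
  by split; [rewrite groupM ?sig | apply: inM_mul => //; apply: inM_sig].
have PG x : x \in Gam -> P x.
  rewrite defG => /gen_prodgP[k [cc Sc ->]].
  elim: k cc Sc => [|k IH] cc Sc.
    by rewrite big_ord0; left; split; [apply: group1 | apply: inM1].
  by rewrite big_ord_recr /=; apply: step (IH _ (fun i => Sc _)) (Sc _).
have PH x : x \in H -> inM x.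
  move=> Hx; case: (PG x (subsetP sHG x Hx)) => [[] // | [h ex [Hh _]]].
  by case/negP: tH; rewrite (_ : t = h^-1 * x) ?groupM ?groupV // ex mulKg.
have [ja [ia [eqa [p [q [u [v [ib1 hu hv]]]]]]]] := PH a Ha.
have [jb [ib [eqb [p' [q' [u' [v' [ib2 hu' hv']]]]]]]] := PH b Hb.
have [da1 da2] : r4 ja = 0%R /\ r4 ia = 1%R.
  by apply: (nf_r4 (j := ja) (i := ia) (l := 0) (k := 1)); rewrite -eqa expg0 mul1g expg1.
have [db1 db2] : r4 jb = 1%R /\ r4 ib = 0%R.
  by apply: (nf_r4 (j := jb) (i := ib) (l := 1) (k := 0)); rewrite -eqb expg0 mulg1 expg1.
rewrite da1 da2 in hu hv; rewrite db1 db2 in hu' hv'.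
have [F1 F2 F3] := fin_T ib1 hu hv ib2 hu' hv'.
have ab_rel : a * b = b * a ^+ c by rewrite conjgC conj_ab.
have E := congr1 (conjg^~ t) ab_rel; move: E => /=.
rewrite !conjMg conjXg ea eb nf_exp !nf_mul => /nf_uniq [_ E2].
have R := r16_mod E2; move: R; rewrite !natrD !natrM !natrX r16c => R.
have md x (y : 'Z_4) : r4 x = y -> (x %% 4)%N = nat_of_ord y.
  by move=> <-; rewrite val_Zp_nat.
have h1 := md _ _ F1; have h2 := md _ _ F2; have h3 := md _ _ F3.
have cj1 : ((-3 : 'Z_16) ^+ j1 = 1)%R.
  rewrite (divn_eq j1 4) h1 addn0 mulnC GRing.exprM.
  rewrite (_ : ((-3 : 'Z_16) ^+ 4 = 1)%R) ?expr1n //.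
  by apply/eqP; vm_compute.
have S16 k : r16 (Sx j1 k) = r16 k.
  elim: k => [//|k IH] /=.
  by rewrite natrD natrM natrX r16c cj1 GRing.mulr1 IH -natrD addn1.
rewrite S16 r16c GRing.exprM cj1 expr1n in R.
have cj2 : ((-3 : 'Z_16) ^+ j2 = (-3) ^+ 3)%R.
  rewrite (divn_eq j2 4) h3 GRing.exprD mulnC GRing.exprM.
  rewrite (_ : ((-3 : 'Z_16) ^+ 4 = 1)%R) ?expr1n ?GRing.mul1r //.
  by apply/eqP; vm_compute.
rewrite cj2 in R.
have ei1 : (r16 i1 = 4 * r16 (i1 %/ 4) + 3)%R.
  by rewrite {1}(divn_eq i1 4) h2 natrD natrM mulrC.
have Z : (r16 i1 * ((-3) ^+ 3 - (-3)) = 0)%R.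
  apply/eqP; rewrite GRing.mulrBr GRing.subr_eq0; apply/eqP.
  apply: (GRing.addIr (r16 i2)); rewrite R; ring.
move: Z; rewrite ei1 (_ : ((-3) ^+ 3 - (-3) = 8 :> 'Z_16)%R); last by apply/eqP; vm_compute.
rewrite GRing.mulrDl [(4 * _)%R]GRing.mulrC -GRing.mulrA (_ : (4 * 8 = 0 :> 'Z_16)%R); last by apply/eqP; vm_compute.
rewrite GRing.mulr0 GRing.add0r => /eqP.
by vm_compute.
Qed.

End Core.

Local Open Scope ring_scope.
Lemma pow2_ring (R : comRingType) (u : R) i : exists v : R,
  (1 + 4 * u) ^+ (2 ^ i) = 1 + (2 ^ (i + 2))%:R * v.
Proof.
elim: i => [|i [v IH]]; first by exists u; rewrite expn0 expr1.
exists (v + (2 ^ i * 2)%:R * v ^+ 2).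
have e1 : (2 ^ (i + 2) = 2 ^ i * 4)%N by rewrite expnD.
have e2 : (2 ^ (i.+1 + 2) = 2 ^ i * 8)%N by rewrite addSn expnS expnD mulnCA.
rewrite expnS mulnC exprM IH e1 e2 !natrM.
ring.
Qed.

Local Open Scope group_scope.
Local Open Scope group_scope.
Section Model.
Variables (m n : nat).
Hypotheses (m1 : (1 < m)%N) (n1 : (1 < n)%N).
Hypothesis cn : ((-3 : 'Z_m) ^+ n = 1)%R.

Definition Pt := ('Z_m * 'Z_n)%type.
Definition fa (x : Pt) : Pt := ((x.1 + 1)%R, x.2).
Definition fa' (x : Pt) : Pt := ((x.1 - 1)%R, x.2).
Definition fb (x : Pt) : Pt := ((-3 * x.1)%R, (x.2 + 1)%R).
Definition fb' (x : Pt) : Pt := (((-3) ^+ n.-1 * x.1)%R, (x.2 - 1)%R).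
Lemma fa_inj : injective fa.
Proof. by apply: (can_inj (g := fa')) => -[x y]; rewrite /fa /fa' /= GRing.addrK. Qed.
Lemma fb_inj : injective fb.
Proof.
apply: (can_inj (g := fb')) => -[x y]; rewrite /fb /fb' /= GRing.addrK.
by rewrite GRing.mulrA -GRing.exprSr prednK ?cn ?GRing.mul1r //; lia.
Qed.
Definition al : {perm Pt} := perm fa_inj.
Definition be : {perm Pt} := perm fb_inj.

Lemma alX k x : (al ^+ k) x = ((x.1 + k%:R)%R, x.2).
Proof.
elim: k => [|k IH]; first by rewrite expg0 perm1 GRing.addr0; case: x.
rewrite expgSr permM IH permE /fa /=; congr (_, _).
by ring.
Qed.
Lemma beX k x : (be ^+ k) x = (((-3) ^+ k * x.1)%R, (x.2 + k%:R)%R).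
Proof.
elim: k => [|k IH]; first by rewrite expg0 perm1 GRing.addr0 GRing.mul1r; case: x.
rewrite expgSr permM IH permE /fb /=; congr (_, _).
  by rewrite GRing.exprS GRing.mulrA.
by ring.
Qed.

Lemma al_m : al ^+ m = 1.
Proof. by apply/permP => x; rewrite alX perm1 pchar_Zp // GRing.addr0; case: x. Qed.
Lemma be_n : be ^+ n = 1.
Proof. by apply/permP => x; rewrite beX perm1 pchar_Zp // GRing.addr0 cn GRing.mul1r; case: x. Qed.
Lemma ba_rel : be * al = al * be * al ^+ 4.
Proof.
apply/permP => x; rewrite !permM !permE /fa /fb /=; congr (_, _).
ring.
Qed.
Lemma comm_rel : [~ be, al] = al ^+ 4.
Proof.
by rewrite /commg /conjg ba_rel -!mulgA !mulKg.
Qed.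

Definition Kg := (<[al]> <*> <[be]>)%G.

Lemma Kg_big : (m * n <= #|Kg|)%N.
Proof.
pose x0 : Pt := (0%R, 0%R).
have : [set: Pt] \subset [set (g : {perm Pt}) x0 | g in Kg].
  apply/subsetP => -[p q] _; apply/imsetP; exists (be ^+ q * al ^+ p).
    have Ha : al \in Kg by rewrite (subsetP (joing_subl _ _)) ?cycle_id.
    have Hb : be \in Kg by rewrite (subsetP (joing_subr _ _)) ?cycle_id.
    by rewrite groupM // groupX.
  by rewrite permM beX alX /= GRing.mulr0 !GRing.add0r !natr_Zp.
move/subset_leq_card; rewrite cardsT card_prod !card_ord => h.
apply: leq_trans (leq_imset_card _ _); apply: leq_trans h; by rewrite !Zp_cast.
Qed.

End Model.

Lemma pow_model K L : (K <= L + 2)%N -> (1 < 2 ^ K)%N -> ((-3 : 'Z_(2 ^ K)) ^+ (2 ^ L) = 1)%R.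
Proof.
move=> KL K1.
rewrite (_ : (-3 : 'Z_(2 ^ K))%R = (1 + 4 * -1)%R); last by ring.
have [v ->] := pow2_ring (-1 : 'Z_(2 ^ K))%R L.
rewrite (_ : (2 ^ (L + 2) = 2 ^ K * 2 ^ (L + 2 - K))%N); last by rewrite -expnD subnKC.
by rewrite natrM pchar_Zp // GRing.mul0r GRing.mul0r GRing.addr0.
Qed.

Lemma Kg_hom m n (m1 : (1 < m)%N) (n1 : (1 < n)%N) cn :
  Kg m1 n1 cn \homg Grp (a : b : (a ^+ m = 1, b ^+ n = 1, [~ b, a] = a ^+ 4)).
Proof.
apply/existsP; exists (al m n, be m1 n1 cn).
rewrite /= !xpair_eqE /=.
by apply/and4P; split; apply/eqP; [done | exact: al_m | exact: be_n | exact: comm_rel].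
Qed.

Lemma key (m n : nat) (rT : finGroupType) (Gam H : {group rT}) (S : {set rT}) :
   (16 %| m)%N -> (0 < m)%N -> (4 %| n)%N -> (0 < n)%N ->
   {in S, forall x, involution x} -> Gam :=: <<S>> -> H \subset Gam -> #|Gam : H| = 2%N ->
   H \homg Grp (a : b : (a ^+ m = 1, b ^+ n = 1, [~ b, a] = a ^+ 4)) ->
   (m * n <= #|H|)%N -> False.
Proof.
move=> m16 mpos n4 npos invS defG sHG iHG hom big.
case/existsP: hom => -[x y] /=; rewrite !xpair_eqE /=.
move=> /and4P[/eqP eH /eqP xm /eqP yn /eqP cr].
rewrite -eH in sHG iHG big.
exact: (core_main m16 mpos n4 npos xm yn cr big invS defG sHG iHG).
Qed.

Theorem mainTheorem1 :
  (forall (m n : nat),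
     (exists k, m = 2 ^ k)%N -> (exists l, n = 2 ^ l)%N ->
     (16 <= m)%N -> (4 <= n)%N -> (m <= 4 * n)%N ->
     forall (gT : finGroupType) (G : {group gT}),
       G \isog Grp (a : b : (a ^+ m = 1, b ^+ n = 1, [~ b, a] = a ^+ 4)) ->
       ~ property_star G)
  /\
  (forall N : nat, exists (gT : finGroupType) (G : {group gT}),
       [/\ 2.-group G, (N < #|G|)%N & ~ property_star G]).
Proof.
split.
  move=> m n [K ->] [L ->] h16 h4 hle gT G isoG [rT [Gam [H [S [invS defG sHG iHG isoHG]]]]].
  have isoH := isoGrp_trans isoHG isoG.
  have K4 : (4 <= K)%N by rewrite -(leq_exp2l _ _ (isT : (1 < 2)%N)).
  have L2 : (2 <= L)%N by rewrite -(leq_exp2l _ _ (isT : (1 < 2)%N)).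
  have KL : (K <= L + 2)%N.
    by rewrite -(leq_exp2l _ _ (isT : (1 < 2)%N)) expnD mulnC.
  have m1 : (1 < 2 ^ K)%N by apply: leq_trans h16.
  have n1 : (1 < 2 ^ L)%N by apply: leq_trans h4.
  have cn := pow_model KL m1.
  have hK := Kg_hom m1 n1 cn.
  have : Kg m1 n1 cn \homg H by rewrite isoH.
  move/leq_homg => le.
  apply: (key _ _ _ _ invS defG sHG iHG (isoGrp_hom isoH)).
  - by rewrite (_ : 16 = 2 ^ 4)%N // dvdn_exp2l.
  - by rewrite expn_gt0.
  - by rewrite (_ : 4 = 2 ^ 2)%N // dvdn_exp2l.
  - by rewrite expn_gt0.
  - exact: leq_trans (Kg_big m1 n1 cn) le.
move=> N.
pose k := (N + 4)%N.
have m1 : (1 < 2 ^ k)%N by apply: leq_trans (ltn_expl _ (isT : (1 < 2)%N)); rewrite /k addn4.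
have KL : (k <= k + 2)%N by rewrite leq_addr.
have cn := pow_model KL m1.
have m16 : (16 %| 2 ^ k)%N by rewrite (_ : 16 = 2 ^ 4)%N // dvdn_exp2l // /k leq_addl.
have m4 : (4 %| 2 ^ k)%N by rewrite (_ : 4 = 2 ^ 2)%N // dvdn_exp2l // /k addn4.
have mpos : (0 < 2 ^ k)%N by rewrite expn_gt0.
exists _, (Kg m1 m1 cn); split.
- rewrite /pgroup; apply: pnat_dvd (card_dvd m16 mpos (al_m _ m1) (be_n m1 m1 cn) (comm_rel m1 m1 cn)) _.
  by rewrite pnatM pnatX pnat_id.
- apply: leq_trans (Kg_big m1 m1 cn).
  apply: leq_trans (ltn_expl N (isT : (1 < 2)%N)) _.
  apply: leq_trans (leq_pmulr _ mpos).
  by rewrite leq_exp2l // /k leq_addr.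
- move=> [rT [Gam [H [S [invS defG sHG iHG isoHK]]]]].
  have hom : H \homg Grp (a : b : (a ^+ (2 ^ k) = 1, b ^+ (2 ^ k) = 1, [~ b, a] = a ^+ 4)).
    by rewrite (eq_homGrp _ isoHK) Kg_hom.
  apply: (key m16 mpos m4 mpos invS defG sHG iHG hom).
  by rewrite (card_isog isoHK) Kg_big.
Qed.
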